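(* Let $\varphi:G\to H$ be a surjective group homomorphism. Then the homomorphism $f_\varphi:H_2(H)\to K_\varphi/\Gamma_\varphi$ induced by the central extension $$1\to K_\varphi/\Gamma_\varphi\to G/\Gamma_\varphi\xrightarrow{\ \varphi\ } H\to 1$$ coincides with the composition $$\psi\circ(i\circ\varepsilon)^{-1}\circ\partial:H_2(H)\to H_1(G,H)\to H_1(\mathrm{Coker}(\delta_\varphi))\to K_\varphi/\Gamma_\varphi .$$
   Context: Group homology: for a group $G$ let $C_n(G)=\mathbb Z[G^n]$ (free abelian group on $G^n$) with differential $d=\sum_{i=0}^n(-1)^id_i$, where $d_0(g_1,\dots,g_n)=(g_2,\dots,g_n)$, $d_i(g_1,\dots,g_n)=(g_1,\dots,g_ig_{i+1},\dots,g_n)$ for $1\le i\le n-1$, $d_n(g_1,\dots,g_n)=(g_1,\dots,g_{n-1})$; $H_n(G)$ is its homology. For a homomorphism $\varphi:G\to H$, $\varphi_*$ acts coordinatewise on chains. The relative complex has $\mathrm{Tot}_n=\mathbb Z[H^{n+1}]\oplus\mathbb Z[G^n]$ with differential $d(\varphi)(y,x)=(dy+\varphi_*(x),-dx)$; its homology is $H_n(G,H)$. For $\varphi$ surjective, the boundary map $\partial:H_{n+1}(H)\to H_n(G,H)$ is defined (with this sign convention) by $\partial[z]=[(0,-d\tilde z)]$, where $z$ is a cycle and $\tilde z\in\mathbb Z[G^{n+1}]$ is any chain with $\varphi_*(\tilde z)=z$. Cokernel complex: $G^n\times_{H^n}G^n$ is the set of pairs $(g^1,g^2)\in G^n\times G^n$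 with $\varphi_*(g^1)=\varphi_*(g^2)$; $\mathrm{Coker}_n(\delta_\varphi)$ is $\mathbb Z[G^n\times_{H^n}G^n]$ modulo the relations $(g^1,g^2)+(g^2,g^3)\sim(g^1,g^3)$, with differential $(g^1,g^2)\mapsto\sum_{i=0}^n(-1)^i(d_ig^1,d_ig^2)$. The chain map $i\circ\varepsilon:\mathrm{Coker}_n(\delta_\varphi)\to\mathrm{Tot}_n$, $(g^1,g^2)\mapsto(0,g^1-g^2)$, induces an isomorphism $H_n(\mathrm{Coker}(\delta_\varphi))\cong H_n(G,H)$ when $\varphi$ is surjective (a known result of M. Levine). $K_\varphi=\ker\varphi$ and $\Gamma_\varphi$ is the smallest normal subgroup of $G$ containing all $gkg^{-1}k^{-1}$ with $g\in G$, $k\in K_\varphi$. The map $\psi:\mathbb Z[G\times_HG]\to K_\varphi/\Gamma_\varphi$, $\sum_iz_i(x_i,y_i)\mapsto\prod_i(x_iy_i^{-1})^{z_i}$ descends to an isomorphism $\psi:H_1(\mathrm{Coker}(\delta_\varphi))\to K_\varphi/\Gamma_\varphi$ (Levine). The map $f_\varphi$ is explicitly: write a class in $H_2(H)$ as represented by a cycle $x=\sum_{i=1}^{2n}(-1)^i(x_i,y_i)$ and choose any set-theoretic section $t:H\to G$ of $\varphi$; then $f_\varphi[x]=\Big(\prod_{k=1}^n t(x_{2k})t(y_{2k})t(x_{2k}y_{2k})^{-1}\Big)\cdot\Big(\prod_{k=1}^n t(x_{2k-1})t(y_{2k-1})t(x_{2k-1}y_{2k-1})^{-1}\Big)^{-1}\in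 K_\varphi/\Gamma_\varphi$. *)

(* Defs.v *)
(* (possibly infinite) groups are mathcomp's [groupType]
   from boot/monoid.v; free abelian groups Z[X] are modelled as formal
   integer combinations (lists) compared coefficientwise. *)
From HB Require Import structures.
From mathcomp Require Import all_boot all_order all_algebra.
Set Implicit Arguments. Unset Strict Implicit. Unset Printing Implicit Defensive.

Definition chain (X : eqType) := seq (int * X).

Definition coef (X : eqType) (c : chain X) (x : X) : int :=
  (\sum_(p <- c | p.2 == x) p.1)%R.

Definition chain_eq (X : eqType) (c c' : chain X) : Prop :=
  forall x, coef c x = coef c' x.

Definition chain_add (X : eqType) (c c' : chain X) : chain X := c ++ c'.
Definition chain_opp (X : eqType) (c : chain X) : chain X :=
  [seq ((- p.1)%R, p.2) | p <- c].
Definition chain_bind (X Y : eqType) (c : chain X) (f : X -> chain Y) : chain Y :=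
  flatten [seq [seq ((p.1 * q.1)%R, q.2) | q <- f p.2] | p <- c].
Definition chain_map (X Y : eqType) (f : X -> Y) (c : chain X) : chain Y :=
  [seq (p.1, f p.2) | p <- c].

Local Open Scope group_scope.

(* Bar complex C_n(G) = Z[G^n] in degrees 1,2,3 (G^1 = G, G^2 = G*G,   *)
(* G^3 = G*G*G), with d = sum_i (-1)^i d_i.                             *)
Definition bd2 (G : groupType) (c : chain (G * G)%type) : chain G :=
  chain_bind c (fun g => [:: (1%R, g.2); ((-1)%R, g.1 * g.2); (1%R, g.1)]).

Definition bd3 (G : groupType) (c : chain (G * G * G)%type) : chain (G * G)%type :=
  chain_bind c (fun g =>
    let: (g1, g2, g3) := g in
    [:: (1%R, (g2, g3)); ((-1)%R, (g1 * g2, g3));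
        (1%R, (g1, g2 * g3)); ((-1)%R, (g1, g2))]).

Definition push1 (G H : groupType) (phi : G -> H) (c : chain G) : chain H :=
  chain_map phi c.
Definition push2 (G H : groupType) (phi : G -> H) (c : chain (G * G)%type)
  : chain (H * H)%type := chain_map (fun g => (phi g.1, phi g.2)) c.

(* Relative complex: Tot_n = Z[H^{n+1}] (+) Z[G^n],                      *)
(* d(y,x) = (dy + phi_* x, - dx).                                       *)
Definition tot1_boundary (G H : groupType) (phi : G -> H)
  (a : chain (H * H)%type) (b : chain G) : Prop :=
  exists (y : chain (H * H * H)%type) (w : chain (G * G)%type),
    chain_eq (chain_add (bd3 y) (push2 phi w)) a /\
    chain_eq (chain_opp (bd2 w)) b.

Definition tot1_homologous (G H : groupType) (phi : G -> H)
  (a1 : chain (H * H)%type) (b1 : chain G)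
  (a2 : chain (H * H)%type) (b2 : chain G) : Prop :=
  tot1_boundary phi (chain_add a1 (chain_opp a2)) (chain_add b1 (chain_opp b2)).

(* Representative of the boundary  d[z] = [(0, - d z~)]  where z~ lifts z *)
Definition partial_rep (G : groupType) (zt : chain (G * G)%type)
  : chain G := chain_opp (bd2 zt).

(* Cokernel complex in degree 1: chains on G x_H G.                    *)
Definition in_fibre_prod (G H : groupType) (phi : G -> H) (c : chain (G * G)%type)
  : bool := all (fun p => phi p.2.1 == phi p.2.2) c.

(* i o eps : (g1,g2) |-> (0, g1 - g2)  (second component) *)
Definition ieps (G : groupType) (c : chain (G * G)%type) : chain G :=
  chain_bind c (fun g => [:: (1%R, g.1); ((-1)%R, g.2)]).

Definition zpowg (G : groupType) (g : G) (z : int) : G :=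
  match z with
  | Posz n => g ^+ n
  | Negz n => (g ^+ n.+1)^-1
  end.

(* psi : sum z_i (x_i,y_i) |-> prod (x_i y_i^-1)^{z_i}, as an element of G
   (to be read in K_phi / Gamma_phi) *)
Definition psi_rep (G : groupType) (c : chain (G * G)%type) : G :=
  \prod_(p <- c) zpowg (p.2.1 * (p.2.2)^-1) p.1.

Definition normal_subgroup (G : groupType) (N : G -> Prop) : Prop :=
  [/\ N 1, (forall x y, N x -> N y -> N (x * y)), (forall x, N x -> N x^-1)
    & (forall g x, N x -> N (g * x * g^-1))].

Definition Gamma (G H : groupType) (phi : G -> H) (x : G) : Prop :=
  forall N : G -> Prop, normal_subgroup N ->
    (forall g k, phi k = 1 -> N (g * k * g^-1 * k^-1)) -> N x.

Definition eq_mod_Gamma (G H : groupType) (phi : G -> H) (a b : G) : Prop :=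
  Gamma phi (a * b^-1).

(* f_phi.  A 2-cycle  x = sum_{i=1}^{2n} (-1)^i (x_i,y_i)  is given by   *)
(* Pl = [(x_2,y_2); (x_4,y_4); ...; (x_2n,y_2n)]  (coefficient +1) and   *)
(* Mi = [(x_1,y_1); (x_3,y_3); ...; (x_2n-1,y_2n-1)] (coefficient -1).   *)
Definition cycle_chain (H : groupType) (Pl Mi : seq (H * H)) : chain (H * H)%type :=
  [seq (1%R, p) | p <- Pl] ++ [seq ((-1)%R, p) | p <- Mi].

Definition f_phi_rep (G H : groupType) (t : H -> G) (Pl Mi : seq (H * H)) : G :=
  (\prod_(p <- Pl) (t p.1 * t p.2 * (t (p.1 * p.2))^-1)) *
  (\prod_(p <- Mi) (t p.1 * t p.2 * (t (p.1 * p.2))^-1))^-1.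

(* Main.v *)
Require Import Defs.
From HB Require Import structures.
From mathcomp Require Import all_boot all_order all_algebra.
Set Implicit Arguments. Unset Strict Implicit.
Import GRing.Theory.
Local Open Scope ring_scope.
From Stdlib Require Import ClassicalEpsilon FunctionalExtensionality PropExtensionality.

Definition lin (X : eqType) (A : zmodType) (F : X -> A) (b : chain X) : A :=
  \sum_(p <- b) F p.2 *~ p.1.

Lemma lin_nil (X : eqType) (A : zmodType) (F : X -> A) : lin F [::] = 0.
Proof. by rewrite /lin big_nil. Qed.
Lemma lin_cons (X : eqType) (A : zmodType) (F : X -> A) p b :
  lin F (p :: b) = F p.2 *~ p.1 + lin F b.
Proof. by rewrite /lin big_cons. Qed.
Lemma lin_cat (X : eqType) (A : zmodType) (F : X -> A) b b' :
  lin F (chain_add b b') = lin F b + lin F b'.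
Proof. by rewrite /lin /chain_add big_cat. Qed.
Lemma lin_opp (X : eqType) (A : zmodType) (F : X -> A) b :
  lin F (chain_opp b) = - lin F b.
Proof.
rewrite /lin /chain_opp big_map -sumrN; apply: eq_bigr => p _ /=; by rewrite mulrNz.
Qed.
Lemma lin_map (X Y : eqType) (A : zmodType) (F : Y -> A) (f : X -> Y) b :
  lin F (chain_map f b) = lin (fun x => F (f x)) b.
Proof. by rewrite /lin /chain_map big_map. Qed.
Lemma lin_bind (X Y : eqType) (A : zmodType) (F : Y -> A) (f : X -> chain Y) b :
  lin F (chain_bind b f) = lin (fun x => lin F (f x)) b.
Proof.
rewrite /lin /chain_bind big_flatten big_map; apply: eq_bigr => p _.
rewrite big_map mulrz_suml; apply: eq_bigr => r _ /=; by rewrite mulrC mulrzA.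
Qed.

Lemma coef_cons (X : eqType) (b : chain X) n y x :
  coef ((n, y) :: b) x = (if y == x then n else 0) + coef b x.
Proof. by rewrite /coef big_cons /=; case: eqP; rewrite ?add0r. Qed.

Lemma lin_coef (X : eqType) (A : zmodType) (F : X -> A) (s : seq X) b :
  uniq s -> {subset [seq p.2 | p <- b] <= s} ->
  lin F b = \sum_(x <- s) F x *~ coef b x.
Proof.
move=> us; elim: b => [|[n y] b IH] hsub.
  by rewrite lin_nil big1 // => x _; rewrite /coef big_nil mulr0z.
rewrite lin_cons IH; last by move=> z hz; apply: hsub; rewrite inE hz orbT.
have ys : y \in s by apply: hsub; rewrite inE eqxx.
rewrite [in RHS](eq_bigr (fun x => F x *~ (if y == x then n else 0) + F x *~ coef b x)); last first.
  by move=> x _; rewrite coef_cons mulrzDr.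
rewrite big_split /=; congr (_ + _).
rewrite (bigD1_seq y) //= eqxx big1 ?addr0 // => x hx.
by rewrite eq_sym (negbTE hx) mulr0z.
Qed.

Lemma lin_eq (X : eqType) (A : zmodType) (F : X -> A) b b' :
  chain_eq b b' -> lin F b = lin F b'.
Proof.
move=> h; set s := undup [seq p.2 | p <- b ++ b'].
rewrite (@lin_coef _ _ F s) ?undup_uniq //; last by move=> x hx; rewrite mem_undup map_cat mem_cat hx.
rewrite (@lin_coef _ _ F s b') ?undup_uniq //; last by move=> x hx; rewrite mem_undup map_cat mem_cat hx orbT.
by apply: eq_bigr => x _; rewrite h.
Qed.
Lemma zm1 (A : zmodType) (a b d : A) : a - (a + b + d) + b = - d.
Proof. by rewrite !opprD !addrA subrr add0r addrAC addNr add0r. Qed.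
Lemma zm2 (A : zmodType) (a b c d : A) : a + b = c + d -> c + (- b + (d + - a)) = 0.
Proof.
move=> e; have -> : c + (- b + (d + - a)) = (c + d) - (a + b).
  by rewrite opprD !addrA [c - b + d]addrAC [RHS]addrAC.
by rewrite e subrr.
Qed.
Close Scope ring_scope.
Local Open Scope group_scope.

Section Q.
Variables (G H : groupType) (phi : G -> H).
Hypothesis phiM : {morph phi : x y / x * y}.

Lemma phi1 : phi 1 = 1.
Proof. apply: (@mulgI _ (phi 1)); by rewrite -phiM !mulg1. Qed.
Lemma phiV x : phi x^-1 = (phi x)^-1.
Proof. apply: (@mulgI _ (phi x)); by rewrite -phiM !mulgV phi1. Qed.

Definition Kp (x : G) : Prop := phi x = 1.
Lemma KM x y : Kp x -> Kp y -> Kp (x * y).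
Proof. by rewrite /Kp phiM => -> ->; rewrite mulg1. Qed.
Lemma KV x : Kp x -> Kp x^-1.
Proof. by rewrite /Kp phiV => ->; rewrite invg1. Qed.
Lemma K1 : Kp 1. Proof. exact: phi1. Qed.
Lemma KJ g x : Kp x -> Kp (g * x * g^-1).
Proof. by rewrite /Kp !phiM phiV => ->; rewrite mulg1 mulgV. Qed.

Lemma Gamma_ns : normal_subgroup (Gamma phi).
Proof.
split.
- by move=> N [] .
- by move=> x y hx hy N hN hg; case: (hN) => _ hM _ _; apply: hM; [apply: hx|apply: hy].
- by move=> x hx N hN hg; case: (hN) => _ _ hV _; apply: hV; apply: hx.
- by move=> g x hx N hN hg; case: (hN) => _ _ _ hJ; apply: hJ; apply: hx.
Qed.
Lemma Gamma_gen g k : phi k = 1 -> Gamma phi (g * k * g^-1 * k^-1).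
Proof. by move=> hk N _ hg; apply: hg. Qed.
Lemma Gamma_K x : Gamma phi x -> Kp x.
Proof.
move=> hx; apply: hx.
- split; [exact: K1| exact: KM | exact: KV | move=> g y; exact: KJ].
- move=> g k hk; apply: KM; [apply: KJ; exact hk | apply: KV; exact hk].
Qed.

Definition eqv (x y : G) := Gamma phi (x * y^-1).
Lemma eqv_refl x : eqv x x.
Proof. rewrite /eqv mulgV; by case: Gamma_ns. Qed.
Lemma eqv_sym x y : eqv x y -> eqv y x.
Proof. rewrite /eqv => h; case: Gamma_ns => _ _ hV _; have := hV _ h. by rewrite invgM invgK. Qed.
Lemma eqv_trans x y z : eqv x y -> eqv y z -> eqv x z.
Proof. rewrite /eqv => h1 h2; case: Gamma_ns => _ hM _ _; have := hM _ _ h1 h2. by rewrite mulgA mulgVK. Qed.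

Definition rep (x : G) : G := epsilon (inhabits (1 : G)) (fun y => eqv x y).
Lemma rep_eqv x : eqv x (rep x).
Proof. apply: (epsilon_spec (inhabits (1:G)) (fun y => eqv x y)); exists x; exact: eqv_refl. Qed.
Lemma rep_eq x y : eqv x y -> rep x = rep y.
Proof.
move=> h; rewrite /rep; congr epsilon; apply: functional_extensionality => z.
apply: propositional_extensionality; split => hz.
  exact: eqv_trans (eqv_sym h) hz.
exact: eqv_trans h hz.
Qed.

Lemma eqv_mul a a' b b' : eqv a a' -> eqv b b' -> eqv (a * b) (a' * b').
Proof.
move=> ha hb; rewrite /eqv.
have -> : a * b * (a' * b')^-1 = a * (b * b'^-1) * a^-1 * (a * a'^-1).
  by rewrite invgM !mulgA mulgVK.
case: Gamma_ns => _ hM _ hJ; apply: hM; [apply: hJ; exact hb | exact ha].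
Qed.
Lemma eqv_inv a a' : eqv a a' -> eqv a^-1 a'^-1.
Proof.
move=> ha; rewrite /eqv invgK.
have -> : a^-1 * a' = a^-1 * (a' * a^-1) * a^-1^-1 by rewrite invgK !mulgA mulgVK.
case: Gamma_ns => _ _ _ hJ; apply: hJ; exact: eqv_sym ha.
Qed.
Lemma eqv_eq a b : a = b -> eqv a b.
Proof. move=> ->; exact: eqv_refl. Qed.

Lemma rep_idem x : rep (rep x) = rep x.
Proof. apply: rep_eq; apply: eqv_sym; exact: rep_eqv. Qed.
Lemma rep_K x : Kp x -> Kp (rep x).
Proof.
move=> hx; have := Gamma_K (rep_eqv x); rewrite /Kp phiM phiV hx mul1g => /eqP.
by rewrite invg_eq1 => /eqP.
Qed.

Definition Qp (x : G) : bool := (rep x == x) && (phi x == 1).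
Definition Q := {x : G | Qp x}.
Lemma Qp_rep x : Kp x -> Qp (rep x).
Proof. by move=> hx; rewrite /Qp rep_idem eqxx /=; apply/eqP; exact: rep_K. Qed.
Definition q0 : Q := exist _ (rep 1) (Qp_rep K1).
Definition q (x : G) : Q := insubd q0 (rep x).
Lemma val_q x : Kp x -> val (q x) = rep x.
Proof. by move=> hx; rewrite /q insubdK //; exact: Qp_rep. Qed.
Lemma Kval (a : Q) : Kp (val a).
Proof. by case: a => x /= /andP [_ /eqP]. Qed.
Lemma qK (a : Q) : q (val a) = a.
Proof. apply: val_inj; rewrite val_q; last exact: Kval. case: a => x hx /=; by case/andP: (hx) => /eqP. Qed.
Lemma q_eq x y : eqv x y -> q x = q y.
Proof. by move=> h; rewrite /q (rep_eq h). Qed.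
Lemma q_eqv x y : Kp x -> Kp y -> q x = q y -> eqv x y.
Proof.
move=> hx hy h; have : val (q x) = val (q y) by rewrite h.
rewrite !val_q // => e; apply: eqv_trans (rep_eqv x) _; rewrite e; exact: eqv_sym (rep_eqv y).
Qed.

Definition addQ (a b : Q) : Q := q (val a * val b).
Definition oppQ (a : Q) : Q := q (val a)^-1.
Definition zeroQ : Q := q 1.

Lemma addqE x y : Kp x -> Kp y -> addQ (q x) (q y) = q (x * y).
Proof. move=> hx hy; rewrite /addQ !val_q //; apply: q_eq; apply: eqv_mul; apply: eqv_sym; exact: rep_eqv. Qed.
Lemma oppqE x : Kp x -> oppQ (q x) = q x^-1.
Proof. move=> hx; rewrite /oppQ !val_q //; apply: q_eq; apply: eqv_inv; apply: eqv_sym; exact: rep_eqv. Qed.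
Lemma qsurj (a : Q) : exists2 x, Kp x & a = q x.
Proof. exists (val a); [exact: Kval | by rewrite qK]. Qed.

Lemma addQA : associative addQ.
Proof.
move=> a b c; case: (qsurj a) => x hx ->; case: (qsurj b) => y hy ->; case: (qsurj c) => z hz ->.
by rewrite !addqE ?mulgA //; apply: KM.
Qed.
Lemma addQC : commutative addQ.
Proof.
move=> a b; case: (qsurj a) => x hx ->; case: (qsurj b) => y hy ->.
rewrite !addqE //; apply: q_eq; rewrite /eqv invgM !mulgA; exact: Gamma_gen.
Qed.
Lemma add0Q : left_id zeroQ addQ.
Proof. move=> a; case: (qsurj a) => x hx ->; by rewrite /zeroQ addqE ?mul1g //; exact: K1. Qed.
Lemma addNQ : left_inverse zeroQ oppQ addQ.
Proof. move=> a; case: (qsurj a) => x hx ->; rewrite oppqE // addqE ?mulVg //; exact: KV. Qed.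

HB.instance Definition _ := Choice.copy Q {x : G | Qp x}.
HB.instance Definition _ := GRing.isZmodule.Build Q addQA addQC add0Q addNQ.

Lemma q1 : q 1 = 0%R. Proof. by []. Qed.
Lemma qM x y : Kp x -> Kp y -> q (x * y) = (q x + q y)%R.
Proof. move=> hx hy; exact: (esym (addqE hx hy)). Qed.
Lemma qV x : Kp x -> q x^-1 = (- q x)%R.
Proof. move=> hx; exact: (esym (oppqE hx)). Qed.
Lemma qJ g x : Kp x -> q (g * x * g^-1) = q x.
Proof.
move=> hx; apply: q_eq; rewrite /eqv; exact: Gamma_gen.
Qed.
Lemma KX x n : Kp x -> Kp (x ^+ n).
Proof. move=> hx; elim: n => [|n IH]; first exact: K1. rewrite expgS; exact: KM. Qed.
Lemma qX x n : Kp x -> q (x ^+ n) = (q x *+ n)%R.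
Proof.
move=> hx; elim: n => [|n IH]; first by rewrite expg0 q1 GRing.mulr0n.
by rewrite expgS qM ?IH ?GRing.mulrS //; exact: KX.
Qed.
Lemma Kz x z : Kp x -> Kp (zpowg x z).
Proof. by move=> hx; case: z => n /=; [exact: KX | apply: KV; exact: KX]. Qed.
Lemma qZ x z : Kp x -> q (zpowg x z) = (q x *~ z)%R.
Proof.
move=> hx; case: z => n /=; first by rewrite qX.
by rewrite qV ?qX ?NegzE ?mulrNz //; exact: KX.
Qed.
Lemma Kprod (I : Type) (l : seq I) (F : I -> G) :
  (forall i, Kp (F i)) -> Kp (\prod_(i <- l) F i).
Proof.
move=> hF; elim: l => [|i l IH]; first by rewrite big_nil; exact: K1.
rewrite big_cons; exact: KM.
Qed.
Lemma qprod (I : Type) (l : seq I) (F : I -> G) :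
  (forall i, Kp (F i)) -> q (\prod_(i <- l) F i) = (\sum_(i <- l) q (F i))%R.
Proof.
move=> hF; elim: l => [|i l IH]; first by rewrite !big_nil q1.
rewrite !big_cons qM ?IH //; exact: Kprod.
Qed.

Variable (t : H -> G).
Hypothesis ht : forall h, phi (t h) = h.

Definition sG (g : G) : G := g * (t (phi g))^-1.
Definition cc (h1 h2 : H) : G := t h1 * t h2 * (t (h1 * h2))^-1.
Lemma KsG g : Kp (sG g).
Proof. by rewrite /Kp /sG phiM phiV ht mulgV. Qed.
Lemma Kcc h1 h2 : Kp (cc h1 h2).
Proof. by rewrite /Kp /cc !phiM phiV !ht mulgV. Qed.

Definition FG (g : G) : Q := q (sG g).
Definition CH (h : H * H) : Q := q (cc h.1 h.2).

Lemma F1 g1 g2 : (FG g2 - FG (g1 * g2) + FG g1 = - CH (phi g1, phi g2))%R.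
Proof.
have E : sG (g1 * g2) = g1 * sG g2 * g1^-1 * sG g1 * cc (phi g1) (phi g2).
  by rewrite /sG /cc !mulgA !mulgVK phiM.
have k1 := KsG g1. have k2 := KsG g2. have k3 := Kcc (phi g1) (phi g2).
have k4 : Kp (g1 * sG g2 * g1^-1) by apply: KJ.
rewrite /FG /CH E qM; [|apply: KM => // | by []].
rewrite qM // qJ //=.
exact: (@zm1 Q _ _ _).
Qed.

Lemma F2 a b x : (CH (a, b) + CH ((a * b)%g, x) = CH (b, x) + CH (a, (b * x)%g))%R.
Proof.
have E : cc a b * cc (a * b) x = t a * cc b x * (t a)^-1 * cc a (b * x).
  by rewrite /cc !mulgA !mulgVK.
have k1 := Kcc a b. have k2 := Kcc (a * b) x. have k3 := Kcc b x. have k4 := Kcc a (b * x).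
have k5 : Kp (t a * cc b x * (t a)^-1) by apply: KJ.
rewrite /CH /= -qM // E qM // qJ //.
Qed.

Lemma lin_ext (X : eqType) (A : zmodType) (F F' : X -> A) b :
  (forall x, F x = F' x) -> lin F b = lin F' b.
Proof. by move=> h; apply: eq_bigr => p _; rewrite h. Qed.

Lemma LG_bd2 w : lin FG (bd2 w) = (- lin CH (push2 phi w))%R.
Proof.
rewrite /bd2 lin_bind /push2 lin_map -lin_opp /chain_opp /lin big_map.
apply: eq_bigr => p _ /=.
rewrite /lin !big_cons big_nil /= !mulr1z mulrN1z GRing.addr0.
by rewrite GRing.addrA F1 mulrNz mulNrz.
Qed.

Lemma LH_bd3 y : lin CH (bd3 y) = 0%R.
Proof.
rewrite /bd3 lin_bind /lin big1 // => -[n [[h1 h2] h3]] _ /=.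
rewrite !big_cons big_nil /= !mulr1z !mulrN1z GRing.addr0.
have := F2 h1 h2 h3 => e.
suff -> : (CH (h2, h3) + (- CH ((h1 * h2)%g, h3) + (CH (h1, (h2 * h3)%g) + - CH (h1, h2))) = 0)%R.
  by rewrite mul0rz.
exact: (@zm2 Q _ _ _ _ e).
Qed.

Lemma qprod_in (I : eqType) (l : seq I) (F : I -> G) :
  (forall i, i \in l -> Kp (F i)) ->
  Kp (\prod_(i <- l) F i) /\ q (\prod_(i <- l) F i) = (\sum_(i <- l) q (F i))%R.
Proof.
elim: l => [|i l IH] hF; first by rewrite !big_nil q1; split => //; exact: K1.
have [hK hq] : Kp (\prod_(i <- l) F i) /\ q (\prod_(i <- l) F i) = (\sum_(i <- l) q (F i))%R.
  by apply: IH => j hj; apply: hF; rewrite inE hj orbT.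
have hi : Kp (F i) by apply: hF; rewrite inE eqxx.
rewrite !big_cons; split; first exact: KM.
by rewrite qM // hq.
Qed.

Lemma lin_cycle Pl Mi :
  lin CH (cycle_chain Pl Mi) = (\sum_(p <- Pl) CH p - \sum_(p <- Mi) CH p)%R.
Proof.
rewrite /cycle_chain /lin big_cat !big_map -GRing.sumrN; congr (_ + _)%R;
  apply: eq_bigr => p _ /=; by rewrite ?mulr1z ?mulrN1z.
Qed.

Lemma main Pl Mi zt c
  (hzt : chain_eq (push2 phi zt) (cycle_chain Pl Mi))
  (hc : in_fibre_prod phi c)
  (hpre : tot1_homologous phi [::] (ieps c) [::] (partial_rep zt)) :
  eq_mod_Gamma phi (f_phi_rep t Pl Mi) (psi_rep c).
Proof.
case: hpre => y [w [h1 h2]].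
have e1 : lin CH (push2 phi w) = 0%R.
  have := lin_eq CH h1; rewrite !lin_cat LH_bd3 GRing.add0r => ->.
  by rewrite lin_opp !lin_nil GRing.oppr0 GRing.addr0.
have e2 : lin FG (ieps c) = lin CH (push2 phi zt).
  have := lin_eq FG h2; rewrite lin_opp LG_bd2 e1 !GRing.oppr0 lin_cat /partial_rep !lin_opp LG_bd2 !GRing.opprK.
  by move/esym/eqP; rewrite GRing.subr_eq0 => /eqP.
have [Kf qf] : Kp (f_phi_rep t Pl Mi) /\
    q (f_phi_rep t Pl Mi) = (\sum_(p <- Pl) CH p - \sum_(p <- Mi) CH p)%R.
  have [KP qP] := @qprod_in _ Pl (fun p => cc p.1 p.2) (fun i _ => Kcc i.1 i.2).
  have [KM' qM'] := @qprod_in _ Mi (fun p => cc p.1 p.2) (fun i _ => Kcc i.1 i.2).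
  rewrite /f_phi_rep; split; first by apply: KM => //; exact: KV.
  by rewrite qM ?qV ?qP ?qM' //; exact: KV.
have hK : forall p, p \in c -> Kp (zpowg (p.2.1 * (p.2.2)^-1) p.1).
  move=> p hp; apply: Kz; have /eqP e := allP hc p hp.
  by rewrite /Kp phiM phiV e mulgV.
have [Kpsi qpsi] := qprod_in hK.
apply: q_eqv => //.
rewrite qf qpsi -lin_cycle -(lin_eq CH hzt) -e2 /ieps lin_bind /lin big_seq [RHS]big_seq.
symmetry.
apply: eq_bigr => p hp; have /eqP e := allP hc p hp.
have E : p.2.1 * (p.2.2)^-1 = sG p.2.1 * (sG p.2.2)^-1.
  by rewrite /sG e invgM invgK !mulgA mulgVK.
rewrite qZ; last by rewrite E; apply: KM; [exact: KsG | apply: KV; exact: KsG].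
rewrite E qM ?qV; try exact: KsG; last by apply: KV; exact: KsG.
by rewrite !big_cons big_nil /= mulr1z mulrN1z GRing.addr0.
Qed.
End Q.

Theorem mainTheorem1
  (G H : groupType) (phi : G -> H)
  (phiM : {morph phi : x y / x * y})
  (phi_surj : forall h : H, exists g : G, phi g = h)
  (Pl Mi : seq (H * H))
  (hsize : size Pl = size Mi)
  (hcycle : chain_eq (bd2 (cycle_chain Pl Mi)) [::])
  (t : H -> G) (ht : forall h, phi (t h) = h)
  (zt : chain (G * G)%type)
  (hzt : chain_eq (push2 phi zt) (cycle_chain Pl Mi))
  (c : chain (G * G)%type)
  (hc : in_fibre_prod phi c)
  (hpre : tot1_homologous phi [::] (ieps c) [::] (partial_rep zt)) :
  eq_mod_Gamma phi (f_phi_rep t Pl Mi) (psi_rep c).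
Proof. exact: (main phiM ht hzt hc hpre). Qed.
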